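(* Let $S=\langle P,\varphi\rangle$ be a SUT model, $t$ a strength and $N\ge1$ an integer. The optimal cost of the Partial MaxSAT instance $TPMSat_{CX}^{N,t,S}$ (defined in the context) is $|\mathcal T_a|-T(N;t,S)$.
   Context: A SUT model is $S=\langle P,\varphi\rangle$, where $P$ is a finite set of parameters, each $p\in P$ having a finite nonempty domain $d(p)$, and $\varphi$ is a propositional formula whose atoms have the form $(p=v)$ with $p\in P$, $v\in d(p)$. A test case is a full assignment $A$ giving each $p$ a value in $d(p)$ such that $\varphi$ is true when each atom $(p=v)$ is read as true iff $A(p)=v$; it is assumed that at least one test case exists. Fix a strength $t$ with $1\le t\le|P|$. A $t$-tuple is an assignment of values to exactly $t$ distinct parameters, viewed as a set of pairs $(p,v)$; a test case covers $\tau$ if it assigns $v$ to $p$ for every $(p,v)\in\tau$. A $t$-tuple is allowed if some test case covers it; $\mathcal T_a$ is the set of allowed $t$-tuples. The Tuple Number $T(N;t,S)$ is the maximum number of $t$-tuples covered (each by at least one member) by a list of $N$ test cases. $[N]=\{1,\dots,N\}$. A Partial MaxSAT instance consists of hard constraints and soft clauses $(c,w)$ with positive integer weights; its optimal cost is the minimum, over truth assignments satisfying all hard constraints, of the total weight of falsified soft clauses ($\infty$ if the hard constraints are unsatisfiable). Variables: $x_{i,p,v}$ ($i\in[N]$, $p\in P$, $v\in d(p)$), $c^i_\tau$ and $c_\tau$ ($i\in[N]$, $\tau\in\mathcal T_a$). Hard constraints of $TPMSat_{CX}^{N,t,S}$: (X) for every $i\in[N]$, $p\in P$: exactly one of $\{x_{i,p,v}:v\in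 d(p)\}$ is true; (SUTX) for every $i\in[N]$: the formula obtained from $\varphi$ by replacing each atom $(p=v)$ with $x_{i,p,v}$; (CX) for every $i\in[N]$, $\tau\in\mathcal T_a$, $(p,v)\in\tau$: $c^i_\tau\rightarrow x_{i,p,v}$; (RC) for every $\tau\in\mathcal T_a$: $c_\tau\leftrightarrow\bigvee_{i\in[N]}c^i_\tau$. Soft clauses (SoftC): $(c_\tau,1)$ for every $\tau\in\mathcal T_a$. *)

(* Defs.v *)
From HB Require Import structures.
From mathcomp Require Import all_boot.

Set Implicit Arguments.
Unset Strict Implicit.
Unset Printing Implicit Defensive.

Inductive form (A : Type) : Type :=
  | FAtom of A
  | FTop
  | FBot
  | FNeg of form A
  | FAnd of form A & form A
  | FOr of form A & form A
  | FImp of form A & form A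
  | FIff of form A & form A.
Arguments FTop {A}.
Arguments FBot {A}.

Fixpoint feval (A : Type) (s : A -> bool) (f : form A) : bool :=
  match f with
  | FAtom a => s a
  | FTop => true
  | FBot => false
  | FNeg g => ~~ feval s g
  | FAnd g h => feval s g && feval s h
  | FOr g h => feval s g || feval s h
  | FImp g h => feval s g ==> feval s h
  | FIff g h => feval s g == feval s h
  end.

Fixpoint fmap (A B : Type) (g : A -> B) (f : form A) : form B :=
  match f with
  | FAtom a => FAtom (g a)
  | FTop => FTop
  | FBot => FBot
  | FNeg h => FNeg (fmap g h)
  | FAnd h k => FAnd (fmap g h) (fmap g k)
  | FOr h k => FOr (fmap g h) (fmap g k)
  | FImp h k => FImp (fmap g h) (fmap g k)
  | FIff h k => FIff (fmap g h) (fmap g k)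
  end.

Fixpoint fatoms (A : Type) (f : form A) : seq A :=
  match f with
  | FAtom a => [:: a]
  | FTop | FBot => [::]
  | FNeg h => fatoms h
  | FAnd h k | FOr h k | FImp h k | FIff h k => fatoms h ++ fatoms k
  end.

Definition big_or (A : Type) (s : seq (form A)) : form A := foldr (@FOr A) FBot s.
Definition big_and (A : Type) (s : seq (form A)) : form A := foldr (@FAnd A) FTop s.

Definition exactly_one (A : eqType) (s : seq A) : form A :=
  FAnd (big_or [seq FAtom x | x <- s])
       (big_and [seq FNeg (FAnd (FAtom xy.1) (FAtom xy.2))
                | xy <- [seq (x, y) | x <- s, y <- s] & xy.1 != xy.2]).

(* hard constraints: formulas; soft clauses: (clause, positive weight) *)
Record pmaxsat (X : finType) := PMaxSat {
  hard : seq (form X);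
  soft : seq (form X * nat)
}.

Section MaxSAT.
Variable X : finType.
Implicit Type I : pmaxsat X.

Definition satisfies_hard I (sigma : {ffun X -> bool}) : bool :=
  all (feval sigma) (hard I).

Definition cost I (sigma : {ffun X -> bool}) : nat :=
  \sum_(c <- soft I | ~~ feval sigma c.1) c.2.

Definition feasible I := [set sigma : {ffun X -> bool} | satisfies_hard I sigma].

(* optimal cost; None stands for infinity (hard constraints unsatisfiable) *)
Definition opt_cost I : option nat :=
  match [pick sigma in feasible I] with
  | None => None
  | Some s0 => Some (cost I [arg min_(sigma < s0 in feasible I) cost I sigma])
  end.
End MaxSAT.

(* Parameters P (finite), a common finite value type V, domains d p : {set V},
   constraint phi : form (P * V), atom (p, v) read as "p = v". *)
Section SUT.
Variables (P V : finType) (d : P -> {set V}) (phi : form (P * V)).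

Definition is_test (A : {ffun P -> V}) : bool :=
  [forall p, A p \in d p] && feval (fun pv : P * V => A pv.1 == pv.2) phi.

(* a t-tuple: assignment of values (from the domains) to exactly t distinct
   parameters, viewed as a set of pairs (p, v) *)
Definition is_ttuple (t : nat) (tau : {set P * V}) : bool :=
  [&& #|tau| == t,
      [forall pv in tau, pv.2 \in d pv.1] &
      [forall pv in tau, forall qw in tau, (pv.1 == qw.1) ==> (pv == qw)]].

Definition covers (A : {ffun P -> V}) (tau : {set P * V}) : bool :=
  [forall pv in tau, A pv.1 == pv.2].

Definition allowed (t : nat) (tau : {set P * V}) : bool :=
  is_ttuple t tau && [exists A, is_test A && covers A tau].

Definition Ta (t : nat) : {set {set P * V}} := [set tau | allowed t tau].

Definition ncovered (N t : nat) (L : {ffun 'I_N -> {ffun P -> V}}) : nat :=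
  #|[set tau | is_ttuple t tau && [exists i, covers (L i) tau]]|.

Definition tuple_number (N t : nat) : nat :=
  \max_(L : {ffun 'I_N -> {ffun P -> V}} | [forall i, is_test (L i)]) ncovered t L.

Definition tvar (N : nat) : finType :=
  ((('I_N * P * V) + ('I_N * {set P * V})) + {set P * V})%type.

Definition xv N (i : 'I_N) (p : P) (v : V) : tvar N := inl (inl (i, p, v)).
Definition cix N (i : 'I_N) (tau : {set P * V}) : tvar N := inl (inr (i, tau)).
Definition cv N (tau : {set P * V}) : tvar N := inr tau.

Definition hard_X (N : nat) : seq (form (tvar N)) :=
  [seq exactly_one [seq xv i p v | v <- enum (d p)] | i <- enum 'I_N, p <- enum P].

Definition hard_SUTX (N : nat) : seq (form (tvar N)) :=
  [seq fmap (fun pv : P * V => xv i pv.1 pv.2) phi | i <- enum 'I_N].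

Definition hard_CX (N t : nat) : seq (form (tvar N)) :=
  flatten [seq [seq FImp (FAtom (cix i tau)) (FAtom (xv i pv.1 pv.2))
               | tau <- enum (Ta t), pv <- enum tau] | i <- enum 'I_N].

Definition hard_RC (N t : nat) : seq (form (tvar N)) :=
  [seq FIff (FAtom (cv N tau)) (big_or [seq FAtom (cix i tau) | i <- enum 'I_N])
  | tau <- enum (Ta t)].

Definition soft_C (N t : nat) : seq (form (tvar N) * nat) :=
  [seq (FAtom (cv N tau), 1) | tau <- enum (Ta t)].

Definition TPMSat_CX (N t : nat) : pmaxsat (tvar N) :=
  PMaxSat (hard_X N ++ hard_SUTX N ++ hard_CX N t ++ hard_RC N t) (soft_C N t).
End SUT.

(* Main.v *)
Require Import Defs.
From HB Require Import structures.
From mathcomp Require Import all_boot.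
Set Implicit Arguments. Unset Strict Implicit.

Lemma feval_ext (A : eqType) (s1 s2 : A -> bool) f :
  (forall a, a \in fatoms f -> s1 a = s2 a) -> feval s1 f = feval s2 f.
Proof.
elim: f => [a|||g IH|g IHg h IHh|g IHg h IHh|g IHg h IHh|g IHg h IHh] //= H;
  try (by rewrite H // mem_head);
  try (by rewrite IH);
  by rewrite IHg ?IHh // => a Ha; apply: H; rewrite mem_cat Ha ?orbT.
Qed.

Lemma feval_fmap (A B : Type) (g : A -> B) s f :
  feval s (fmap g f) = feval (fun a => s (g a)) f.
Proof. by elim: f => //= [g' ->|g1 -> g2 ->|g1 -> g2 ->|g1 -> g2 ->|g1 -> g2 ->]. Qed.

Lemma feval_big_or A s (l : seq (form A)) : feval s (big_or l) = has (feval s) l.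
Proof. by elim: l => //= f l <-. Qed.

Lemma feval_big_and A s (l : seq (form A)) : feval s (big_and l) = all (feval s) l.
Proof. by elim: l => //= f l <-. Qed.

Lemma eo_elim (A : eqType) (s : seq A) (sg : A -> bool) :
  feval sg (exactly_one s) ->
  (exists2 x, x \in s & sg x) /\
  (forall x y, x \in s -> y \in s -> sg x -> sg y -> x = y).
Proof.
rewrite /exactly_one /= feval_big_or feval_big_and has_map all_map => /andP[/hasP [x xs sx] H].
split; first by exists x.
move=> a b ha hb sa sb; apply/eqP; apply/negPn/negP => nab.
move/allP: H => /(_ (a, b)); rewrite mem_filter /= nab sa sb /=.
by move=> /(_ (allpairs_f pair ha hb)).
Qed.

Lemma eo_intro (A : eqType) (s : seq A) (sg : A -> bool) :
  (exists2 x, x \in s & sg x) ->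
  (forall x y, x \in s -> y \in s -> sg x -> sg y -> x = y) ->
  feval sg (exactly_one s).
Proof.
move=> [x xs sx] H.
rewrite /exactly_one /= feval_big_or feval_big_and has_map all_map.
apply/andP; split; first by apply/hasP; exists x.
apply/allP => -[a b]; rewrite mem_filter /= => /andP[nab /allpairsP [[a' b'] [/= ha hb]]].
case=> ea eb; subst a' b'.
apply/negP => /andP[sa sb]; move: nab; by rewrite (H _ _ ha hb sa sb) eqxx.
Qed.

Lemma hard_spec (P V : finType) (d : P -> {set V}) (phi : form (P * V)) (t N : nat)
  (sigma : {ffun tvar P V N -> bool}) :
  satisfies_hard (TPMSat_CX d phi N t) sigma <->
  [/\ forall i p, feval sigma (exactly_one [seq xv i p v | v <- enum (d p)]),
      forall i, feval sigma (fmap (fun pv : P * V => xv i pv.1 pv.2) phi),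
      (forall i tau pv, tau \in Ta d phi t -> pv \in tau -> sigma (cix i tau) -> sigma (xv i pv.1 pv.2)) &
      (forall tau, tau \in Ta d phi t -> sigma (cv N tau) = [exists i, sigma (cix i tau)])].
Proof.
have all_flat : forall (T : Type) (a : pred T) (ss : seq (seq T)),
  all a (flatten ss) = all (all a) ss.
  by move=> T a; elim=> //= s0 ss IH; rewrite all_cat IH.
rewrite /satisfies_hard [hard _]/= !all_cat /hard_X /hard_SUTX /hard_CX /hard_RC.
rewrite !all_flat !all_map.
have inN : forall i : 'I_N, i \in Finite.enum 'I_N by move=> i; rewrite -enumT mem_enum.
split.
  move=> /and4P [/allP HX /allP HS /allP HCX /allP HRC]; split.
  - move=> i p; have := HX i (inN i); rewrite /= all_map => /allP; apply.
    by rewrite mem_enum.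
  - by move=> i; apply: (HS i (inN i)).
  - move=> i tau pv Htau Hpv Hc.
    have := HCX i (inN i); rewrite /= all_flat all_map => /allP /(_ tau).
    rewrite mem_enum => /(_ Htau); rewrite /= all_map => /allP /(_ pv).
    by rewrite mem_enum /= Hc => /(_ Hpv).
  - move=> tau Htau.
    have := HRC tau; rewrite mem_enum /= feval_big_or has_map => /(_ Htau) /eqP ->.
    apply/hasP/existsP => [[i _ hi]|[i hi]]; first by exists i.
    by exists i; rewrite ?mem_enum.
move=> [HX HS HCX HRC]; apply/and4P; split.
- apply/allP => i _ /=; rewrite all_map; apply/allP => p _ /=; exact: HX.
- by apply/allP => i _; apply: HS.
- apply/allP => i _ /=; rewrite all_flat all_map; apply/allP => tau Ht /=.
  rewrite all_map; apply/allP => pv Hpv /=.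
  apply/implyP; apply: (HCX i tau pv) => //; by rewrite -mem_enum.
- apply/allP => tau Ht /=; have HT : tau \in Ta d phi t by rewrite -mem_enum.
  rewrite feval_big_or has_map (HRC tau HT).
  apply/eqP; apply/idP/idP => [/existsP [i hi]|/hasP [i _ hi]]; last by apply/existsP; exists i.
  by apply/hasP; exists i; rewrite ?mem_enum.
Qed.

Lemma cost_spec (P V : finType) (d : P -> {set V}) (phi : form (P * V)) (t N : nat)
  (sigma : {ffun tvar P V N -> bool}) :
  cost (TPMSat_CX d phi N t) sigma = #|Ta d phi t :\: [set tau | sigma (cv N tau)]|.
Proof.
rewrite /cost /= /soft_C big_map /= big_enum_cond /=.
rewrite -sum1dep_card; apply: eq_bigl => tau; by rewrite !inE andbC.
Qed.

Lemma xv_inj (P V : finType) N (i j : 'I_N) (p q : P) (v w : V) :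
  xv i p v = xv j q w -> (i, p, v) = (j, q, w).
Proof. by rewrite /xv => -[-> -> ->]. Qed.

Lemma lower_bound (P V : finType) (d : P -> {set V}) (phi : form (P * V))
    (t N : nat)
    (phi_wf : forall pv : P * V, pv \in fatoms phi -> pv.2 \in d pv.1)
    (A0 : {ffun P -> V})
    (sigma : {ffun tvar P V N -> bool}) :
  satisfies_hard (TPMSat_CX d phi N t) sigma ->
  #|Ta d phi t| - tuple_number d phi N t <= cost (TPMSat_CX d phi N t) sigma.
Proof.
move=> /hard_spec [HX HS HCX HRC].
pose L : {ffun 'I_N -> {ffun P -> V}} :=
  [ffun i => [ffun p => odflt (A0 p) [pick v in d p | sigma (xv i p v)]]].
have key : forall i p v, v \in d p -> sigma (xv i p v) = (L i p == v).
  move=> i p v vd; have [[x xin sx] Huniq] := eo_elim (HX i p).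
  move: xin => /mapP [w0 w0in ex]; subst x.
  rewrite /L !ffunE; case: pickP => [w /andP [wd sw]|H] /=; last first.
    by move: (H w0); rewrite -mem_enum w0in sx.
  apply/idP/eqP => [sv|<-//].
  have := Huniq _ _ (map_f _ (eq_ind_r _ wd (mem_enum _ _))) (map_f _ (eq_ind_r _ vd (mem_enum _ _))) sw sv.
  by move/xv_inj => [].
have Ltest : forall i, is_test d phi (L i).
  move=> i; apply/andP; split.
    apply/forallP => p; rewrite /L !ffunE; case: pickP => [w /andP [wd _]//|H] /=.
    have [[x xin sx] _] := eo_elim (HX i p).
    move: xin => /mapP [w0 w0in ex]; subst x.
    by move: (H w0); rewrite -mem_enum w0in sx.
  have := HS i; rewrite feval_fmap; congr is_true; apply: feval_ext => pv Hpv /=.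
  by rewrite key //; apply: phi_wf.
have HT : ncovered d t L <= tuple_number d phi N t.
  rewrite /tuple_number; apply: (@leq_bigmax_cond _ (fun L : {ffun 'I_N -> {ffun P -> V}} => [forall i, is_test d phi (L i)]) (fun L => ncovered d t L)); exact/forallP.
have Hsub : #|Ta d phi t :&: [set tau | sigma (cv N tau)]| <= ncovered d t L.
  apply: subset_leq_card; apply/subsetP => tau; rewrite inE => /andP [HTa].
  rewrite inE (HRC _ HTa) => /existsP [i Hi].
  move: (HTa); rewrite inE => /andP [Htt _].
  rewrite inE Htt /=; apply/existsP; exists i; apply/forallP => pv; apply/implyP => pvin.
  have pvd : pv.2 \in d pv.1.
    by case/and3P: Htt => _ /forallP /(_ pv) /implyP /(_ pvin).
  by rewrite -key //; apply: HCX HTa pvin Hi.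
rewrite cost_spec -(cardsID [set tau | sigma (cv N tau)] (Ta d phi t)).
rewrite leq_subLR; apply: leq_add => //; exact: leq_trans Hsub HT.
Qed.

Lemma upper_bound (P V : finType) (d : P -> {set V}) (phi : form (P * V))
    (t N : nat) (A0 : {ffun P -> V}) (HA0 : is_test d phi A0) :
  exists2 sigma : {ffun tvar P V N -> bool},
  satisfies_hard (TPMSat_CX d phi N t) sigma &
  cost (TPMSat_CX d phi N t) sigma = #|Ta d phi t| - tuple_number d phi N t.
Proof.
have Hpos : 0 < #|[pred L : {ffun 'I_N -> {ffun P -> V}} | [forall i, is_test d phi (L i)]]|.
  apply/card_gt0P; exists [ffun _ => A0]; rewrite inE; apply/forallP => i; by rewrite ffunE.
have [L0 HL0 Heq] := @eq_bigmax_cond _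
  [pred L : {ffun 'I_N -> {ffun P -> V}} | [forall i, is_test d phi (L i)]]
  (fun L => ncovered d t L) Hpos.
have HT : tuple_number d phi N t = ncovered d t L0 by rewrite -Heq.
rewrite inE in HL0; move/forallP: HL0 => HL0.
pose sigma0 : {ffun tvar P V N -> bool} := [ffun x : tvar P V N =>
  match x with
  | inl (inl (i, p, v)) => L0 i p == v
  | inl (inr (i, tau)) => covers (L0 i) tau
  | inr tau => [exists i, covers (L0 i) tau]
  end].
exists sigma0.
  apply/hard_spec; split.
  - move=> i p; apply: eo_intro.
      exists (xv i p (L0 i p)); last by rewrite /sigma0 ffunE /=.
      apply: map_f; rewrite mem_enum.
      by case/andP: (HL0 i) => /forallP.
    move=> x y /mapP [v _ ->] /mapP [w _ ->]; rewrite /sigma0 !ffunE.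
    by move=> /eqP <- /eqP <-.
  - move=> i; rewrite feval_fmap; case/andP: (HL0 i) => _; congr is_true.
    by apply: feval_ext => pv _; rewrite /sigma0 ffunE.
  - move=> i tau pv _ pvin; rewrite /sigma0 !ffunE => /forallP /(_ pv).
    by rewrite pvin.
  - by move=> tau _; rewrite /sigma0 ffunE; apply: eq_existsb => i; rewrite ffunE.
rewrite cost_spec HT.
have Hset : Ta d phi t :&: [set tau | sigma0 (cv N tau)] =
            [set tau | is_ttuple d t tau && [exists i, covers (L0 i) tau]].
  apply/setP => tau; rewrite !inE /sigma0 ffunE.
  apply/andP/andP => [[/andP [Htt _] Hc]|[Htt /existsP [i Hc]]]; first by [].
  split; last by apply/existsP; exists i.
  rewrite /allowed Htt /=; apply/existsP; exists (L0 i); by rewrite HL0.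
rewrite /ncovered -Hset -(cardsID [set tau | sigma0 (cv N tau)] (Ta d phi t)).
by rewrite addKn.
Qed.
Theorem proposition9 (P V : finType) (d : P -> {set V}) (phi : form (P * V))
    (t N : nat)
    (d_nonempty : forall p : P, d p != set0)
    (phi_wf : forall pv : P * V, pv \in fatoms phi -> pv.2 \in d pv.1)
    (test_exists : exists A : {ffun P -> V}, is_test d phi A)
    (t_ge1 : 1 <= t) (t_le : t <= #|P|)
    (N_ge1 : 1 <= N) :
  opt_cost (TPMSat_CX d phi N t) =
    Some (#|Ta d phi t| - tuple_number d phi N t).
Proof.
have [A0 HA0] := test_exists.
have [s1 Hs1 Hc1] := upper_bound t N HA0.
rewrite /opt_cost; case: pickP => [s0 Hs0|Hnone]; last first.
  by move: (Hnone s1); rewrite inE Hs1.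
congr Some; case: arg_minnP => // s Hs Hmin.
apply/eqP; rewrite eqn_leq; apply/andP; split.
  by rewrite -Hc1; apply: Hmin; rewrite inE.
by apply: (lower_bound phi_wf A0); rewrite inE in Hs.
Qed.
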